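(* Fix calibration values $E^1,\dots,E^n\in\mathbb{R}^d_+$ with $\hat\sigma_j>0$ for all $j$. For every $t\in\mathbb{R}^d_+$, \[ \hat\Phi^{\mathrm{gwc}}(t):=\max_{1\le j\le d}\ \sup_{z_j\ge 0}\frac{t_j-\hat\mu_j(z_j)}{\hat\sigma_j(z_j)} =\max_{1\le j\le d}\max\Big\{\frac{t_j-\hat\mu_j(0)}{\hat\sigma_j(0)},\ \frac{t_j-\hat\mu_j(z^*_j)}{\hat\sigma_j(z^*_j)},\ -\frac{1}{\sqrt{n+1}}\Big\}, \] where $z^*_j=\hat\mu_j-\frac{\hat\sigma_j^2}{t_j-\hat\mu_j}$ if $t_j\ne\hat\mu_j$ and $\hat\mu_j\ge \frac{\hat\sigma_j^2}{t_j-\hat\mu_j}$, and $z^*_j=0$ otherwise (including when $t_j=\hat\mu_j$).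
   Context: $n\ge2$, $d\ge1$ integers. Calibration statistics: $\hat\mu_j=\frac1n\sum_{i=1}^n E^i_j$ and $\hat\sigma_j=\sqrt{\frac1n\sum_{i=1}^n(E^i_j-\hat\mu_j)^2}$. For $z\ge0$ (a placeholder for the unknown test residual coordinate), $\hat\mu_j(z)=\frac{\sum_{i=1}^nE^i_j+z}{n+1}$ and $\hat\sigma_j(z)=\sqrt{\frac{\sum_{i=1}^n(E^i_j-\hat\mu_j(z))^2+(z-\hat\mu_j(z))^2}{n}}$. *)

(* Defs.v *)
From HB Require Import structures.
From mathcomp Require Import all_boot all_order all_algebra.
From mathcomp Require Import all_classical all_reals all_analysis.
Set Implicit Arguments. Unset Strict Implicit. Unset Printing Implicit Defensive.
Import Order.TTheory GRing.Theory Num.Theory.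
Local Open Scope ring_scope.
Local Open Scope classical_set_scope.

Section GWC.
Variables (R : realType) (n d : nat).
(* calibration residuals: E i j = E^i_j, i : 'I_n, j : 'I_d *)
Variable E : 'I_n -> 'I_d -> R.

Definition mu_hat (j : 'I_d) : R := (\sum_(i < n) E i j) / n%:R.

Definition sigma_hat (j : 'I_d) : R :=
  Num.sqrt ((\sum_(i < n) (E i j - mu_hat j) ^+ 2) / n%:R).

Definition mu_z (j : 'I_d) (z : R) : R := (\sum_(i < n) E i j + z) / n.+1%:R.

Definition sigma_z (j : 'I_d) (z : R) : R :=
  Num.sqrt ((\sum_(i < n) (E i j - mu_z j z) ^+ 2 + (z - mu_z j z) ^+ 2) / n%:R).

Definition zstar (t : 'I_d -> R) (j : 'I_d) : R :=
  if (t j != mu_hat j) && (sigma_hat j ^+ 2 / (t j - mu_hat j) <= mu_hat j)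
  then mu_hat j - sigma_hat j ^+ 2 / (t j - mu_hat j) else 0.

Definition Phi_gwc (t : 'I_d -> R) : \bar R :=
  \big[Order.max/-oo%E]_(j < d)
    ereal_sup [set ((t j - mu_z j z) / sigma_z j z)%:E | z in [set z : R | 0 <= z]].

Definition Phi_gwc_closed (t : 'I_d -> R) : \bar R :=
  \big[Order.max/-oo%E]_(j < d)
    (Num.max ((t j - mu_z j 0) / sigma_z j 0)
      (Num.max ((t j - mu_z j (zstar t j)) / sigma_z j (zstar t j))
               (- (Num.sqrt (n.+1%:R))^-1)))%:E.
End GWC.

(* Main.v *)
Require Import Defs.
From HB Require Import structures.
From mathcomp Require Import all_boot all_order all_algebra.
From mathcomp Require Import all_classical all_reals all_analysis.
From mathcomp Require Import ring lra.
Import Order.TTheory GRing.Theory Num.Theory.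
Local Open Scope ring_scope.

Section S.
Variable R : realType.

Lemma sq_le (X Y : R) : 0 <= Y -> X ^+ 2 <= Y ^+ 2 -> X <= Y.
Proof. move=> hY h. nra. Qed.

Lemma frac_le (pu pw du dw : R) : 0 < du -> 0 < dw -> pu <= pw ->
  (0 < pu -> pu^+2 * dw^+2 <= pw^+2 * du^+2) ->
  (pw < 0 -> pw^+2 * du^+2 <= pu^+2 * dw^+2) -> pu / du <= pw / dw.
Proof.
move=> hdu hdw hp h1 h2.
rewrite ler_pdivrMr // mulrAC ler_pdivlMr //.
have [hpu|hpu] := ltrP 0 pu.
  apply: sq_le; first by nra.
  rewrite !exprMn; exact: h1.
have [hpw|hpw] := ltrP pw 0.
  have := h2 hpw. rewrite -!exprMn => h.
  suff : - (pw * du) <= - (pu * dw) by lra.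
  apply: sq_le; first by nra. by rewrite !sqrrN.
nra.
Qed.

Lemma frac_le_pos (p1 p2 d1 d2 : R) : 0 < d1 -> 0 < d2 -> 0 < p1 -> 0 < p2 ->
  p1^+2 * d2^+2 <= p2^+2 * d1^+2 -> p1 / d1 <= p2 / d2.
Proof.
move=> h1 h2 h3 h4 h.
rewrite ler_pdivrMr // mulrAC ler_pdivlMr //.
apply: sq_le; first by nra. by rewrite !exprMn.
Qed.

Section Scal.
Variables (t mu s k : R).
Hypotheses (hmu : 0 <= mu) (hs : 0 < s) (hk : 0 < k).
Let a : R := t - mu.
Let P (x : R) : R := t - mu - (x - mu) / k.
Let D (x : R) : R := Num.sqrt (s ^+ 2 + (x - mu) ^+ 2 / k).

Lemma D_sq (x : R) : D x ^+ 2 = s ^+ 2 + (x - mu) ^+ 2 / k.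
Proof. rewrite /D sqr_sqrtr //; apply: addr_ge0; first exact: sqr_ge0.
by apply: divr_ge0; [exact: sqr_ge0 | exact: ltW]. Qed.

Lemma D_gt0 (x : R) : 0 < D x.
Proof. rewrite /D sqrtr_gt0; apply: ltr_wpDr; last by rewrite exprn_gt0.
by apply: divr_ge0; [exact: sqr_ge0 | exact: ltW]. Qed.

Lemma Delta (u w : R) : P w ^+ 2 * D u ^+ 2 - P u ^+ 2 * D w ^+ 2 =
  (u - w) / k * (P w * (s ^+ 2 + a * (u - mu)) + P u * (s ^+ 2 + a * (w - mu))).
Proof. rewrite !D_sq /P /a. field. by rewrite lt0r_neq0. Qed.

Lemma mono_dec (u w : R) : w <= u -> 0 <= s ^+ 2 + a * (u - mu) ->
  0 <= s ^+ 2 + a * (w - mu) -> P u / D u <= P w / D w.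
Proof.
move=> hwu h1 h2.
have hPl : P u <= P w.
  rewrite /P lerD2l lerN2; apply: ler_wpM2r; [by rewrite invr_ge0 ltW | lra].
have huw : 0 <= (u - w) / k by apply: divr_ge0; [lra | exact: ltW].
have := Delta u w => hD.
apply: frac_le => //; try exact: D_gt0.
- move=> hpu.
  have hK : 0 <= P w * (s ^+ 2 + a * (u - mu)) + P u * (s ^+ 2 + a * (w - mu)).
    apply: addr_ge0; apply: mulr_ge0; lra.
  have := mulr_ge0 huw hK. lra.
- move=> hpw.
  have hK : P w * (s ^+ 2 + a * (u - mu)) + P u * (s ^+ 2 + a * (w - mu)) <= 0.
    rewrite -oppr_ge0 opprD; apply: addr_ge0; rewrite -mulNr; apply: mulr_ge0; lra.
  have := mulr_ge0_le0 huw hK. lra.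
Qed.

Lemma mono_inc (u w : R) : 0 < a -> w <= u -> s ^+ 2 + a * (u - mu) <= 0 ->
  s ^+ 2 + a * (w - mu) <= 0 -> P w / D w <= P u / D u.
Proof.
move=> ha hwu h1 h2.
have hPpos x : s ^+ 2 + a * (x - mu) <= 0 -> 0 < P x.
  move=> hx. have hxm : x - mu < 0.
    have hs2 : 0 < s ^+ 2 by rewrite exprn_gt0.
    rewrite ltNge; apply/negP => hh. have := mulr_ge0 (ltW ha) hh. lra.
  rewrite /P -/a. have : (x - mu) / k < 0 by rewrite pmulr_llt0 ?invr_gt0.
  lra.
have huw : 0 <= (u - w) / k by apply: divr_ge0; [lra | exact: ltW].
have := Delta u w => hD.
have := hPpos _ h1; have := hPpos _ h2 => hw hu.
apply: frac_le_pos => //; try exact: D_gt0.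
have hK : P w * (s ^+ 2 + a * (u - mu)) + P u * (s ^+ 2 + a * (w - mu)) <= 0.
  rewrite -oppr_ge0 opprD; apply: addr_ge0; rewrite -mulrN; apply: mulr_ge0; lra.
have := mulr_ge0_le0 huw hK. lra.
Qed.

Let zs : R := if (t != mu) && (s ^+ 2 / (t - mu) <= mu) then mu - s ^+ 2 / (t - mu) else 0.
Let c : R := - (Num.sqrt k)^-1.

Lemma zs_ge0 : 0 <= zs.
Proof. rewrite /zs; case: ifP => // /andP[_ h]; lra. Qed.

Lemma sqk : Num.sqrt k ^+ 2 = k.
Proof. by rewrite sqr_sqrtr // ltW. Qed.
Lemma sqk_gt0 : 0 < Num.sqrt k.
Proof. by rewrite sqrtr_gt0. Qed.

Lemma upper (z : R) : 0 <= z -> P z / D z <= Num.max (P 0 / D 0) (Num.max (P zs / D zs) c).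
Proof.
move=> hz.
have hs2 : 0 < s ^+ 2 by rewrite exprn_gt0.
have htm : (t != mu) = (a != 0) by rewrite /a subr_eq0.
case: (ltgtP a 0) => ha.
- have [h|h] := lerP 0 (s ^+ 2 + a * (z - mu)).
    rewrite le_max; apply/orP; left.
    apply: mono_dec => //. nra.
  rewrite le_max; apply/orP; right; rewrite le_max; apply/orP; right.
  have hx : 0 < z - mu by nra.
  have hr := sqk_gt0; have hr2 := sqk.
  set r := Num.sqrt k in hr hr2 *.
  have hD := D_gt0 z.
  have hPr : P z * r <= - D z.
    suff : D z <= - (P z * r) by lra.
    apply: sq_le.
      have : (z - mu) / k > 0 by rewrite divr_gt0.
      move=> hh. have ea : a = t - mu by []. have hP : P z < 0 by rewrite /P /= subr_lt0; exact: lt_trans ha hh. rewrite -mulNr; apply: mulr_ge0; lra.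
    rewrite sqrrN D_sq exprMn hr2.
    have -> : P z ^+ 2 * k = a ^+ 2 * k - 2 * a * (z - mu) + (z - mu) ^+ 2 / k.
      rewrite /P -/a. field. by rewrite lt0r_neq0.
    have : 0 <= a ^+ 2 * k by rewrite mulr_ge0 // ?sqr_ge0 // ltW.
    nra.
  rewrite ler_pdivrMr // /c.
  have -> : P z = P z * r * r^-1 by rewrite mulfK // lt0r_neq0.
  rewrite -/r (_ : - r^-1 * D z = - D z * r^-1); last by rewrite !mulNr mulrC.
  apply: ler_wpM2r; first by rewrite invr_ge0 ltW.
  exact: hPr.
- have [hc|hc] := lerP (s ^+ 2 / a) mu.
    have hzs : zs = mu - s ^+ 2 / a by rewrite /zs htm gt_eqF //= /a hc.
    have hzs0 : s ^+ 2 + a * (zs - mu) = 0.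
      rewrite hzs. field. by rewrite gt_eqF.
    rewrite le_max; apply/orP; right; rewrite le_max; apply/orP; left.
    have [h|h] := lerP zs z.
      apply: mono_dec => //; last by rewrite -[X in _ <= X]/(s ^+ 2 + a * (zs - mu)) hzs0.
      have : a * (zs - mu) <= a * (z - mu) by apply: ler_wpM2l; [exact: ltW | lra].
      lra.
    apply: mono_inc => //; first exact: ltW.
      by rewrite -[X in X <= _]/(s ^+ 2 + a * (zs - mu)) hzs0.
    have : a * (z - mu) <= a * (zs - mu) by apply: ler_wpM2l; [exact: ltW | lra].
    lra.
  have hzs : zs = 0 by rewrite /zs htm gt_eqF //= /a leNgt hc.
  rewrite le_max; apply/orP; left.
  have hm : a * mu < s ^+ 2.
    by rewrite mulrC -ltr_pdivlMr.
  apply: mono_dec => //; nra.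
- have hzs : zs = 0 by rewrite /zs htm ha eqxx.
  rewrite le_max; apply/orP; left.
  apply: mono_dec => //; rewrite ha !mul0r addr0 ltW //.
Qed.

Lemma approx (b : R) : b < c -> exists z : R, 0 <= z /\ b < P z / D z.
Proof.
move=> hb.
have hr := sqk_gt0; have hr2 := sqk.
set r := Num.sqrt k in hr hr2 *.
have hbr : 1 + b * r < 0.
  move: hb; rewrite /c -/r => hb.
  have : b * r < - r^-1 * r by rewrite ltr_pM2r.
  rewrite mulNr mulVf ?lt0r_neq0 //. lra.
have hb0 : b < 0.
  have : 0 < r^-1 by rewrite invr_gt0. rewrite /c -/r in hb. lra.
set x := k * (`|a| + 1) / (- (1 + b * r)).
have hx : 0 < x.
  rewrite /x; apply: divr_gt0; last by lra.
  by apply: mulr_gt0.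
exists (mu + x); split; first by rewrite addr_ge0 // ltW.
have hD := D_gt0 (mu + x).
rewrite ltr_pdivlMr //.
have hDx : x / r <= D (mu + x).
  apply: sq_le; first by apply: ltW.
  rewrite D_sq addrAC subrr add0r exprMn exprVn hr2.
  have : 0 <= s ^+ 2 by exact: sqr_ge0. lra.
have h1 : b * D (mu + x) <= b * (x / r).
  by rewrite ler_wnM2l // ltW.
have hxi : x * (1 + b * r) / k = - (`|a| + 1).
  rewrite /x. field. by rewrite lt0r_neq0 // ltr0_neq0.
have hri : b * (x / r) + x / k = x * (1 + b * r) / k.
  have -> : r^-1 = r / k. rewrite -[X in _ = _ / X]hr2. field. by rewrite lt0r_neq0.
  field. by rewrite lt0r_neq0.
have : - `|a| <= a by have h := ler_norm (- a); rewrite normrN in h; lra.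
rewrite /P (_ : mu + x - mu = x); last by rewrite (addrC mu x) addrK. rewrite -[X in _ < X]/(t - mu - x / k) => ha2. have ea : a = t - mu by []. rewrite hxi in hri. lra.
Qed.

Lemma sup_eq (F : R -> R) (HF : forall z, F z = P z / D z) :
  ereal_sup [set (F z)%:E | z in [set z | 0 <= z]] =
  (Num.max (F 0) (Num.max (F zs) c))%:E.
Proof.
set S := ereal_sup _.
have ub : forall z : R, 0 <= z -> ((F z)%:E <= S)%E.
  by move=> z hz; apply: ereal_sup_ubound; exists z.
apply/eqP; rewrite eq_le; apply/andP; split.
  apply: ge_ereal_sup => _ [z hz <-]; rewrite lee_fin !HF; exact: upper.
have h0 := ub 0 (lexx 0).
rewrite !EFin_max !ge_max; apply/and3P; split => //.
  exact: ub zs_ge0.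
rewrite leNgt; apply/negP => hlt.
move: h0 hlt; case hS: S => [b| |] //= h0 hlt.
have hbc : b < c by rewrite -lte_fin.
have [z [hz hbz]] := approx b hbc.
have := ub z hz. rewrite hS lee_fin HF. lra.
Qed.
End Scal.
End S.

Lemma sqexp (R : realType) (x y w : R) :
  (x - w) ^+ 2 = (x - y) ^+ 2 + (2 * (y - w)) * (x - y) + (y - w) ^+ 2.
Proof. ring. Qed.

Lemma sig_id (R : realType) (n d : nat) (hn : (2 <= n)%N)
  (E : 'I_n -> 'I_d -> R) (j : 'I_d) (z : R) :
  sigma_z E j z = Num.sqrt (sigma_hat E j ^+ 2 + (z - mu_hat E j) ^+ 2 / n.+1%:R).
Proof.
have hn0 : n%:R != 0 :> R by rewrite pnatr_eq0 -lt0n (leq_trans _ hn).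
have hn1 : n%:R + 1 != 0 :> R by rewrite natr1 pnatr_eq0.
rewrite /sigma_z /sigma_hat sqr_sqrtr; last first.
  apply: divr_ge0; last exact: ler0n.
  by apply: sumr_ge0 => i _; exact: sqr_ge0.
congr Num.sqrt.
set mu := mu_hat E j; set m := mu_z E j z.
set Q := \sum_(i < n) (E i j - mu) ^+ 2.
have hS : \sum_(i < n) E i j = mu * n%:R by rewrite /mu /mu_hat mulfVK.
rewrite (eq_bigr (fun i => (E i j - mu) ^+ 2 + (2 * (mu - m)) * (E i j - mu) + (mu - m) ^+ 2)); last by move=> i _; exact: sqexp.
rewrite !big_split /= -mulr_sumr sumrB !sumr_const !card_ord -/Q.
have hS' : \sum_(i < n) E i j = mu *+ n by rewrite hS mulr_natr.
rewrite hS' subrr mulr0 addr0 -[(mu - m) ^+ 2 *+ n]mulr_natr.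
rewrite /m /mu_z hS -addn1 natrD.
clearbody mu Q.
move: (n%:R) hn0 hn1 => N hn0 hn1.
field. by rewrite hn0 hn1.
Qed.

Lemma mu_id (R : realType) (n d : nat) (hn : (2 <= n)%N)
  (E : 'I_n -> 'I_d -> R) (j : 'I_d) (z : R) :
  mu_z E j z = mu_hat E j + (z - mu_hat E j) / n.+1%:R.
Proof.
have hn0 : n%:R != 0 :> R by rewrite pnatr_eq0 -lt0n (leq_trans _ hn).
have hn1 : n%:R + 1 != 0 :> R by rewrite natr1 pnatr_eq0.
rewrite /mu_z /mu_hat -addn1 natrD. field. by rewrite hn0 hn1.
Qed.

Theorem lemma3p3 (R : realType) (n d : nat) (hn : (2 <= n)%N) (hd : (1 <= d)%N)
  (E : 'I_n -> 'I_d -> R) (hE : forall i j, 0 <= E i j)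
  (hsig : forall j, 0 < sigma_hat E j)
  (t : 'I_d -> R) (ht : forall j, 0 <= t j) :
  Phi_gwc E t = Phi_gwc_closed E t.
Proof.
rewrite /Phi_gwc /Phi_gwc_closed; apply: eq_bigr => j _.
have hk : 0 < n.+1%:R :> R by rewrite ltr0Sn.
have hmu : 0 <= mu_hat E j.
  by apply: divr_ge0; [apply: sumr_ge0 => i _; exact: hE | exact: ler0n].
rewrite (@sup_eq R (t j) (mu_hat E j) (sigma_hat E j) n.+1%:R hmu (hsig j) hk
   (fun z => (t j - mu_z E j z) / sigma_z E j z)) //.
move=> z /=. by rewrite mu_id // sig_id // opprD addrA.
Qed.
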